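(* In the setting below, let $f_1,\dots,f_n$ be $x$-monomials $f_i=a_ix_1^{b_{i1}}\cdots x_n^{b_{in}}$ with $a_i\in K_w[\mathcal G]$ nonzero and $\det(b_{ij})\ne0$, and let $\Phi(\mathbf x)=\sum_{\mathbf k}\phi_{\mathbf k}\mathbf x^{\mathbf k}\in K_w^{\mathbf f}[\mathcal G\oplus\mathcal H]$. Then $\Phi(f_1,\dots,f_n)$ exists in $K_w[\mathcal G\oplus\mathcal H]$ and $$\mathop{\mathrm{CT}}_{\mathbf x}\Phi(f_1,\dots,f_n)=\mathop{\mathrm{CT}}_{f_1,\dots,f_n}\Phi(f_1,\dots,f_n)=\phi_{\mathbf 0}.$$
   Context: $K$ a field; $\mathcal G\oplus\mathcal H$ a totally ordered abelian group (translation-invariant total order) with $\mathcal H\cong\mathbb Z^n$ with basis $e_1,\dots,e_n$, $x_i=t^{e_i}$; $K_w[\cdot]$ denotes Malcev–Neumann series (formal series with well-ordered support); elements of $K_w[\mathcal G\oplus\mathcal H]$ are written $\sum_{\mathbf k}b_{\mathbf k}\mathbf x^{\mathbf k}$, $b_{\mathbf k}\in K_w[\mathcal G]$, and $\mathop{\mathrm{CT}}_{\mathbf x}$ extracts $b_{\mathbf 0}$. An $x$-monomial is a series with exactly one nonzero term $b_{\mathbf k}\mathbf x^{\mathbf k}$. If the initial (least-order) term of $f_i$ is $c_it^{g_i}\mathbf x^{\mathbf b_i}$ ($c_i\in K$, $g_i\in\mathcal G$), $\mathbf f$ denotes the injective endomorphism of $\mathcal G\oplus\mathcal H$ fixing $\mathcal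 G$ with $e_i\mapsto g_i+\sum_jb_{ij}e_j$, and $K_w^{\mathbf f}[\mathcal G\oplus\mathcal H]$ is the field of formal series whose support is well-ordered for the order $a\le^{\mathbf f}b\iff\mathbf f(a)\le\mathbf f(b)$. $\mathop{\mathrm{CT}}_{f_1,\dots,f_n}\Phi(f_1,\dots,f_n)$ denotes the coefficient $\phi_{\mathbf 0}$ of $\Phi(\mathbf x)$ viewed in $K_w^{\mathbf f}[\mathcal G\oplus\mathcal H]$; $\Phi(f_1,\dots,f_n)=\sum_{\mathbf k}\phi_{\mathbf k}f_1^{k_1}\cdots f_n^{k_n}$. *)

(* Defs.v *)
(* Malcev–Neumann series are modelled as coefficient functions
   Γ -> K on Γ = G ⊕ Z^n, encoded as G * 'rV[int]_n, with well-ordered support. *)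
From HB Require Import structures.
From mathcomp Require Import all_boot all_order all_algebra.
Set Implicit Arguments. Unset Strict Implicit. Unset Printing Implicit Defensive.
Import Order.TTheory GRing.Theory Num.Theory.
Local Open Scope ring_scope.

Definition wellordered (T : Type) (le : rel T) (A : T -> Prop) : Prop :=
  forall B : T -> Prop, (forall x, B x -> A x) -> (exists x, B x) ->
    exists m, B m /\ forall y, B y -> le m y.

Definition supp (T : Type) (K : nzRingType) (s : T -> K) : T -> Prop :=
  fun t => s t != 0.

Definition sums (I : eqType) (T : Type) (K : nzRingType)
  (F : I -> T -> K) (S : T -> K) : Prop :=
  forall t, exists s : seq I, [/\ uniq s, (forall i, F i t != 0 -> i \in s)
                                 & S t = \sum_(i <- s) F i t].

Definition mulser (G : zmodType) (K : nzRingType) (a b c : G -> K) : Prop :=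
  sums (fun h g => a h * b (g - h)) c.

Definition oneser (G : zmodType) (K : nzRingType) : G -> K :=
  fun g => if g == 0 then 1 else 0.

Definition leG (G : zmodType) (n : nat) (le : rel (G * 'rV[int]_n)) : rel G :=
  fun g h => le (g, 0) (h, 0).

Definition tot_ord_group (G : zmodType) (n : nat) (le : rel (G * 'rV[int]_n)) : Prop :=
  [/\ (forall x y, le x y -> le y x -> x = y),
      (forall x y z, le x y -> le y z -> le x z),
      (forall x y, le x y || le y x)
    & (forall x y z, le x y -> le (x.1 + z.1, x.2 + z.2) (y.1 + z.1, y.2 + z.2))].

Definition evec (n : nat) (i : 'I_n) : 'rV[int]_n := delta_mx 0 i.

(* P k = a_1^{k_1} ... a_n^{k_n} in K_w[G] (k in Z^n): P 0 = 1,
   P (k + e_i) = P k * a_i, all P k in K_w[G]. *)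
Definition powfam (G : zmodType) (K : fieldType) (n : nat)
  (le : rel (G * 'rV[int]_n)) (a : 'I_n -> G -> K) (P : 'rV[int]_n -> G -> K) : Prop :=
  [/\ P 0 = @oneser G K,
      (forall k i, mulser (P k) (a i) (P (k + evec i)))
    & (forall k, wellordered (leG le) (supp (P k)))].

Definition fendo (G : zmodType) (n : nat) (gmin : 'I_n -> G) (B : 'M[int]_n)
  (x : G * 'rV[int]_n) : G * 'rV[int]_n :=
  (x.1 + \sum_(i < n) gmin i *~ (x.2 0 i), x.2 *m B).

Definition lef (G : zmodType) (n : nat) (le : rel (G * 'rV[int]_n))
  (gmin : 'I_n -> G) (B : 'M[int]_n) : rel (G * 'rV[int]_n) :=
  fun x y => le (fendo gmin B x) (fendo gmin B y).

(* the term phi_k f^k = (phi_k * P_k) x^{kB} as a series on G ⊕ Z^n,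
   where C k = phi_k * P_k in K_w[G] *)
Definition term (G : zmodType) (K : fieldType) (n : nat) (B : 'M[int]_n)
  (C : 'rV[int]_n -> G -> K) (k : 'rV[int]_n) : G * 'rV[int]_n -> K :=
  fun x => if x.2 == k *m B then C k x.1 else 0.

(* Main.v *)
Require Import Defs.
From HB Require Import structures.
From mathcomp Require Import all_boot all_order all_algebra.
From mathcomp Require Import boolp.
From Stdlib Require Import Classical ClassicalEpsilon.
Set Implicit Arguments. Unset Strict Implicit. Unset Printing Implicit Defensive.
Import Order.TTheory GRing.Theory Num.Theory.
Local Open Scope ring_scope.

Definition eps (A : Type) (d : A) (P : A -> Prop) : A := epsilon (inhabits d) P.
Lemma epsP A d (P : A -> Prop) : (exists x, P x) -> P (eps d P).
Proof. exact: epsilon_spec. Qed.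

Lemma nat_min (P : nat -> Prop) :
  (exists n, P n) -> exists n, P n /\ forall m, P m -> (n <= m)%N.
Proof.
move=> [n Pn]; elim: n {-2}n (leqnn n) Pn => [|N IH] n hn Pn.
  exists 0%N; split => //; by move: hn; rewrite leqn0 => /eqP <-.
case: (classic (exists m, P m /\ (m < n)%N)) => [[m [Pm lt]]|nex].
  by apply: (IH m) => //; rewrite -ltnS (leq_trans lt hn).
exists n; split => // m Pm; rewrite leqNgt; apply/negP => lt; apply nex; eauto.
Qed.

Lemma chain (A : Type) (R : A -> A -> Prop) (f : nat -> A) :
  (forall x y z, R x y -> R y z -> R x z) -> (forall t, R (f t) (f t.+1)) ->
  forall t u, (t < u)%N -> R (f t) (f u).
Proof.
move=> tr st t u; elim: u => // u IH; rewrite ltnS leq_eqVlt => /orP [/eqP ->|/IH h] //.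
exact: tr h (st u).
Qed.

Definition finp (T : eqType) (P : T -> Prop) :=
  exists s : seq T, uniq s /\ forall x, P x -> x \in s.

Section OG.
Variables (T : zmodType) (L : rel T).
Definition ogrp := [/\ (forall x y, L x y -> L y x -> x = y),
  (forall x y z, L x y -> L y z -> L x z), (forall x y, L x y || L y x)
  & (forall x y z, L x y -> L (x + z) (y + z))].
Hypothesis HL : ogrp.

Lemma Lanti x y : L x y -> L y x -> x = y. Proof. by case: HL => h _ _ _; apply: h. Qed.
Lemma Ltr x y z : L x y -> L y z -> L x z. Proof. by case: HL => _ h _ _; apply: h. Qed.
Lemma Ltot x y : L x y || L y x. Proof. by case: HL => _ _ h _; apply: h. Qed.
Lemma Ladd x y z : L x y -> L (x + z) (y + z). Proof. by case: HL => _ _ _ h; apply: h. Qed.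
Lemma Lrefl x : L x x. Proof. by move: (Ltot x x); rewrite orbb. Qed.

Definition lt x y := ~~ L y x.
Lemma ltW x y : lt x y -> L x y.
Proof. by rewrite /lt; have := Ltot x y; case: (L x y) => //= ->. Qed.
Lemma lt_neq x y : lt x y -> x != y.
Proof. by rewrite /lt; apply: contraNneq => ->; apply: Lrefl. Qed.
Lemma Ladd2r x y z : L (x + z) (y + z) = L x y.
Proof.
apply/idP/idP; last exact: Ladd.
by move/(Ladd (- z)); rewrite -!addrA subrr !addr0.
Qed.
Lemma Ladd2l x y z : L (z + x) (z + y) = L x y.
Proof. by rewrite ![z + _]addrC Ladd2r. Qed.
Lemma ltadd2r x y z : lt (x + z) (y + z) = lt x y.
Proof. by rewrite /lt Ladd2r. Qed.
Lemma ltadd2l x y z : lt (z + x) (z + y) = lt x y.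
Proof. by rewrite /lt Ladd2l. Qed.
Lemma Ladd2 a b c d : L a b -> L c d -> L (a + c) (b + d).
Proof. move=> h1 h2; apply: (Ltr (Ladd c h1)); by rewrite Ladd2l. Qed.
Lemma lt_L_tr x y z : lt x y -> L y z -> lt x z.
Proof. move=> h1 h2; apply/negP => h3; move/negP: h1; apply; exact: Ltr h2 h3. Qed.
Lemma L_lt_tr x y z : L x y -> lt y z -> lt x z.
Proof. move=> h1 h2; apply/negP => h3; move/negP: h2; apply; exact: Ltr h3 h1. Qed.
Lemma lt_tr x y z : lt x y -> lt y z -> lt x z.
Proof. by move=> h1 /ltW; apply: lt_L_tr. Qed.
Lemma Lopp x y : L x y = L (- y) (- x).
Proof.
have h a b : L a b -> L (- b) (- a).
  move=> /(Ladd (- a - b)); have -> : a + (- a - b) = - b by rewrite addrA subrr add0r.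
  by rewrite addrC addrNK.
by apply/idP/idP => /h //; rewrite !opprK.
Qed.
Lemma ltNge x y : lt x y = ~~ L y x. Proof. by []. Qed.
Lemma LNlt x y : L x y = ~~ lt y x. Proof. by rewrite /lt negbK. Qed.
Lemma lt_or_eq x y : L x y -> lt x y \/ x = y.
Proof.
move=> h; case: (boolP (L y x)) => h2; last by left.
by right; apply: Lanti.
Qed.
Lemma lt_irr x : ~~ lt x x. Proof. by rewrite /lt negbK Lrefl. Qed.

Notation wo := (wellordered L).

Lemma wo_sub (A B : T -> Prop) : (forall x, B x -> A x) -> wo A -> wo B.
Proof. move=> sub woA C CB; apply: woA => x /CB; exact: sub. Qed.

Lemma wo_min (A : T -> Prop) : wo A -> (exists x, A x) -> exists m, A m /\ forall y, A y -> L m y.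
Proof. by move=> woA; apply: woA. Qed.

Lemma wo_union (A B : T -> Prop) : wo A -> wo B -> wo (fun x => A x \/ B x).
Proof.
move=> woA woB C CAB [x Cx].
case: (classic (exists x, C x /\ A x)) => hA; case: (classic (exists x, C x /\ B x)) => hB.
- have [m1 [[Cm1 _] h1]] := woA _ (fun x (h : C x /\ A x) => h.2) hA.
  have [m2 [[Cm2 _] h2]] := woB _ (fun x (h : C x /\ B x) => h.2) hB.
  have [l12|l21] := orP (Ltot m1 m2).
  + exists m1; split => // y Cy; case: (CAB _ Cy) => hy; first exact: h1.
    exact: Ltr l12 (h2 _ (conj Cy hy)).
  + exists m2; split => // y Cy; case: (CAB _ Cy) => hy; last exact: h2.
    exact: Ltr l21 (h1 _ (conj Cy hy)).
- have [m1 [[Cm1 _] h1]] := woA _ (fun x (h : C x /\ A x) => h.2) hA.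
  exists m1; split => // y Cy; case: (CAB _ Cy) => hy; first exact: h1.
  by case: hB; eauto.
- have [m2 [[Cm2 _] h2]] := woB _ (fun x (h : C x /\ B x) => h.2) hB.
  exists m2; split => // y Cy; case: (CAB _ Cy) => hy; last exact: h2.
  by case: hA; eauto.
- by case: (CAB _ Cx) => h; [case: hA|case: hB]; eauto.
Qed.

Lemma wo_translate (A : T -> Prop) c : wo A -> wo (fun y => A (y + c)).
Proof.
move=> woA C CA [x Cx].
have [m [[y [Cy ->]] hm]] := woA (fun z => exists y, C y /\ z = y + c)
  (fun z '(ex_intro y (conj Cy e)) => eq_ind_r A (CA _ Cy) e) (ex_intro _ (x + c) (ex_intro _ x (conj Cx erefl))).
exists y; split => // y' Cy'; rewrite -(Ladd2r _ _ c); apply: hm; eauto.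
Qed.

Lemma wo_nodesc (A : T -> Prop) (s : nat -> T) :
  wo A -> (forall j, A (s j)) -> ~ (forall j, lt (s j.+1) (s j)).
Proof.
move=> woA As desc.
have [m [[i ->] hm]] := woA (fun x => exists i, x = s i) (fun x '(ex_intro i e) => eq_ind_r A (As i) e)
   (ex_intro _ (s 0%N) (ex_intro _ 0%N erefl)).
by move/negP: (desc i); apply; apply: hm; eauto.
Qed.

Lemma not_wo_ex (X : T -> Prop) : ~ wo X -> exists B : T -> Prop,
  [/\ (forall y, B y -> X y), (exists x, B x) & (forall m, B m -> exists y, B y /\ lt y m)].
Proof.
move=> nwo; apply: NNPP => hn; apply: nwo => B BX [x Bx].
apply: NNPP => hm; apply: hn; exists B; split; eauto => m Bm.
apply: NNPP => hy; apply: hm; exists m; split => // y By.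
apply: NNPP => hL; apply: hy; exists y; split => //; exact/negP.
Qed.

Lemma nodesc_wo (A : T -> Prop) :
  (forall s : nat -> T, (forall j, A (s j)) -> ~ (forall j, lt (s j.+1) (s j))) -> wo A.
Proof.
move=> H; apply: NNPP => /not_wo_ex [B [BA [x Bx] nomin]].
pose nx (y : T) := eps y (fun z => B z /\ lt z y).
pose s j := iter j nx x.
have Bs j : B (s j).
  elim: j => // j IH; exact: (epsP (s j) (nomin _ IH)).1.
apply: (H s) => [j|j]; first exact/BA/Bs.
exact: (epsP (s j) (nomin _ (Bs j))).2.
Qed.

Lemma subseq_nondec (A : T -> Prop) (s : nat -> T) : wo A -> (forall j, A (s j)) ->
  exists phi : nat -> nat, (forall t, (phi t < phi t.+1)%N) /\ (forall t, L (s (phi t)) (s (phi t.+1))).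
Proof.
move=> woA As.
have ex j : exists i, (j <= i)%N /\ forall i', (j <= i')%N -> L (s i) (s i').
  have [m [[i [ji ->]] hm]] := woA (fun x => exists i, (j <= i)%N /\ x = s i)
    (fun x '(ex_intro i (conj _ e)) => eq_ind_r A (As i) e)
    (ex_intro _ (s j) (ex_intro _ j (conj (leqnn j) erefl))).
  by exists i; split => // i' ji'; apply: hm; eauto.
pose g j := eps 0%N (fun i => (j <= i)%N /\ forall i', (j <= i')%N -> L (s i) (s i')).
have gP j : (j <= g j)%N /\ forall i', (j <= i')%N -> L (s (g j)) (s i') by exact: epsP (ex j).
pose phi t := iter t (fun j => g j.+1) (g 0%N).
exists phi; split => t.
  by rewrite /phi iterS; case: (gP (iter t (fun j => g j.+1) (g 0%N)).+1).
have [j [ej lej]] : exists j, phi t = g j /\ (j <= phi t)%N.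
  case: t => [|t]; first by exists 0%N.
  by exists (phi t).+1; split => //; rewrite /phi iterS; case: (gP (phi t).+1).
rewrite ej; apply: (gP j).2; rewrite /phi iterS -/(phi t).
by apply: leq_trans lej _; apply: leq_trans (leqnSn _) (gP _).1.
Qed.

Lemma desc_chain (s : nat -> T) : (forall j, lt (s j.+1) (s j)) ->
  forall t u, (t < u)%N -> lt (s u) (s t).
Proof.
move=> d t u tu; apply: (chain (R := fun x y => lt y x) (f := s) _ d tu).
by move=> x y z h1 h2; exact: lt_tr h2 h1.
Qed.

Definition sumset (A B : T -> Prop) := fun x => exists a b, [/\ A a, B b & x = a + b].

Lemma wo_sumset A B : wo A -> wo B -> wo (sumset A B).
Proof.
move=> woA woB; apply: nodesc_wo => s hs desc.
pose pa j := eps (0, 0) (fun p : T * T => [/\ A p.1, B p.2 & s j = p.1 + p.2]).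
have ex j : exists p : T * T, [/\ A p.1, B p.2 & s j = p.1 + p.2].
  by have [a [b h]] := hs j; exists (a, b).
have paP j : [/\ A (pa j).1, B (pa j).2 & s j = (pa j).1 + (pa j).2] := epsP (0, 0) (ex j).
have paA j : A (pa j).1 by case: (paP j).
have [phi [inc nd]] := subseq_nondec (s := fun j => (pa j).1) woA paA.
apply: (@wo_nodesc B (fun t => (pa (phi t)).2) woB) => [t|t]; first by case: (paP (phi t)).
apply/negP => hb.
have dd : lt (s (phi t.+1)) (s (phi t)).
  exact: desc_chain desc _ _ (inc t).
move/negP: dd; apply.
case: (paP (phi t)) => _ _ ->; case: (paP (phi t.+1)) => _ _ ->.
exact: Ladd2 (nd t) hb.
Qed.

Lemma wo2_fin (S : T -> Prop) : wo S -> wellordered (fun x y => L y x) S -> finp S.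
Proof.
move=> wo1 wo2.
pose U a := S a /\ finp (fun b => S b /\ L b a).
have allU a : S a -> U a.
  move=> Sa; apply: NNPP => nU.
  have [c [[Sc nUc] hc]] := wo1 (fun a => S a /\ ~ U a) (fun a h => h.1) (ex_intro _ a (conj Sa nU)).
  apply: nUc; split => //.
  case: (classic (exists b, S b /\ lt b c)) => [hD|nD].
  - have [d [[Sd ldc] hd]] := wo2 (fun b => S b /\ lt b c) (fun b h => h.1) hD.
    have [_ [s [us hs]]] : U d.
      apply: NNPP => nUd; move/negP: ldc; apply; exact: hc.
    exists (undup (c :: s)); split; first exact: undup_uniq.
    move=> b [Sb Lbc]; rewrite mem_undup in_cons.
    case: (lt_or_eq Lbc) => [lbc|->]; last by rewrite eqxx.
    by rewrite hs ?orbT //; split => //; apply: hd.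
  - exists [:: c]; split => // b [Sb Lbc]; rewrite inE.
    case: (lt_or_eq Lbc) => [lbc|->]; last by rewrite eqxx.
    by case: nD; eauto.
case: (classic (exists x, S x)) => [hS|nS]; last by exists [::]; split => // x Sx; case: nS; eauto.
have [e [Se he]] := wo2 S (fun x h => h) hS.
have [_ [s [us hs]]] := allU e Se.
by exists s; split => // x Sx; apply: hs; split => //; apply: he.
Qed.

Lemma fin_conv (A B : T -> Prop) x : wo A -> wo B -> finp (fun a => A a /\ B (x - a)).
Proof.
move=> woA woB; apply: wo2_fin; first by apply: wo_sub woA => a [].
move=> C CS [c Cc].
have [m [[a [Ca ->]] hm]] := woB (fun z => exists a, C a /\ z = x - a)
  (fun z '(ex_intro a (conj Ca e)) => eq_ind_r B (CS _ Ca).2 e) (ex_intro _ (x - c) (ex_intro _ c (conj Cc erefl))).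
exists a; split => // y Cy; have := hm (x - y) (ex_intro _ y (conj Cy erefl)).
by rewrite Ladd2l Lopp !opprK.
Qed.

Fixpoint msum (A : T -> Prop) (m : nat) (x : T) : Prop :=
  match m with 0%N => x = 0 | m'.+1 => exists a y, [/\ A a, msum A m' y & x = a + y] end.
Definition star A x := exists m, msum A m x.

Section Neumann.
Variable A : T -> Prop.
Hypothesis Apos : forall a, A a -> lt 0 a.
Hypothesis woA : wo A.

Lemma msum_ge0 m x : msum A m x -> L 0 x.
Proof.
elim: m x => [|m IH] x /=; first by move=> ->; exact: Lrefl.
move=> [a [y [Aa my ->]]]; rewrite -(addr0 0); apply: Ladd2 (ltW (Apos Aa)) (IH _ my).
Qed.
Lemma msum_gt0 m x : msum A m.+1 x -> lt 0 x.
Proof.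
move=> [a [y [Aa my ->]]].
apply: lt_L_tr (Apos Aa) _; rewrite -{1}(addr0 a) Ladd2l; exact: msum_ge0 my.
Qed.

Lemma down_bad (X B : T -> Prop) x : (forall y, B y -> X y) ->
  (forall m, B m -> exists y, B y /\ lt y m) -> B x -> ~ wo (fun y => X y /\ L y x).
Proof.
move=> BX nm Bx wod.
have [m [[Bm Lmx] hm]] := wod (fun y => B y /\ L y x) (fun y h => conj (BX _ h.1) h.2)
  (ex_intro _ x (conj Bx (Lrefl x))).
have [y [By lym]] := nm m Bm.
have Lyx := Ltr (ltW lym) Lmx.
by move/negP: lym; apply; apply: hm.
Qed.

Definition Bad x := star A x /\ ~ wo (fun y => star A y /\ L y x).

Lemma Bad_step x : Bad x -> exists y, Bad y /\ lt y x.
Proof.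
move=> [sx /not_wo_ex [B [BX [y0 By0] nm]]].
have [y1 [By1 l10]] := nm _ By0.
exists y1; split; last exact: lt_L_tr l10 (BX _ By0).2.
split; first exact: (BX _ By1).1.
by apply: (down_bad (B := B)) => // y /BX [].
Qed.

Lemma Bad_ne0 x : Bad x -> x != 0.
Proof.
move=> [_ nw]; apply/negP => /eqP x0; apply: nw; subst x.
move=> C CS [c Cc]; exists c; split => // y Cy.
have e z : C z -> z = 0.
  move=> Cz; have [[m mz] Lz] := CS _ Cz; apply: Lanti Lz (msum_ge0 mz).
by rewrite (e _ Cc) (e _ Cy) Lrefl.
Qed.

Lemma neumann1 : wo (star A).
Proof.
apply: NNPP => nwo.
have [x0 Bx0] : exists x, Bad x.
  have [B [BX [x Bx] nm]] := not_wo_ex nwo.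
  by exists x; split; [exact: BX| apply: (down_bad (B := B))].
pose Lt (o : option T) y := if o is Some p then lt y p else true.
pose Step o (ym : T * nat) := [/\ Bad ym.1, Lt o ym.1, msum A ym.2 ym.1 &
   forall y' m', Bad y' -> Lt o y' -> msum A m' y' -> (ym.2 <= m')%N].
have StepE o : (exists y, Bad y /\ Lt o y) -> exists ym, Step o ym.
  move=> [y [By Ly]].
  have [m [[y1 [By1 Ly1 my1]] hm]] := nat_min (P := fun m => exists y, [/\ Bad y, Lt o y & msum A m y])
    (let: conj sy _ := By in let: ex_intro m my := sy in ex_intro _ m (ex_intro _ y (And3 By Ly my))).
  by exists (y1, m); split => // y' m' B' L' M'; apply: hm; exists y'.
pose F o := eps (0, 0%N) (Step o).
pose x := fix x j := if j is j'.+1 then F (Some (x j').1) else F None.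
pose prev j := if j is j'.+1 then Some (x j').1 else None.
have xS j : Step (prev j) (x j).
  elim: j => [|j IH]; first by apply: (epsP (0, 0%N) (P := Step None)); apply: StepE; exists x0.
  apply: (epsP (0, 0%N) (P := Step (Some (x j).1))); apply: StepE; case: IH => BxJ _ _ _.
  by have [y [By ly]] := Bad_step BxJ; exists y.
have mpos j : (0 < (x j).2)%N.
  case: (xS j) => Bj _ mj _; case E: (x j).2 mj => [|m] //= e.
  by move/Bad_ne0: Bj; rewrite e eqxx.
pose az j := eps (0, 0) (fun p : T * T => [/\ A p.1, msum A ((x j).2).-1 p.2 & (x j).1 = p.1 + p.2]).
have azP j : [/\ A (az j).1, msum A ((x j).2).-1 (az j).2 & (x j).1 = (az j).1 + (az j).2].
  apply: (epsP (0, 0) (P := fun p : T * T => [/\ A p.1, msum A ((x j).2).-1 p.2 & (x j).1 = p.1 + p.2])).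
  case: (xS j) => _ _ + _; move: (mpos j); case: (x j).2 => // m _ /=.
  by move=> [a [y h]]; exists (a, y).
have desc j : lt (x j.+1).1 (x j).1 by case: (xS j.+1).
have azA j : A (az j).1 by case: (azP j).
have [phi [inc nd]] := subseq_nondec (s := fun j => (az j).1) woA azA.
have zdesc t : lt (az (phi t.+1)).2 (az (phi t)).2.
  apply/negP => hb.
  have dd : lt (x (phi t.+1)).1 (x (phi t)).1.
    move: (desc_chain (s := fun j => (x j).1) desc (inc t)) => /= h; exact: h.
  move/negP: dd; apply.
  case: (azP (phi t)) => _ _ ->; case: (azP (phi t.+1)) => _ _ ->.
  exact: Ladd2 (nd t) hb.
set w := (az (phi 0%N)).2.
have Bw : Bad w.
  split; first by exists ((x (phi 0%N)).2).-1; case: (azP (phi 0%N)).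
  apply: (down_bad (B := fun z => exists t, z = (az (phi t)).2)).
  - by move=> z [t ->]; exists ((x (phi t)).2).-1; case: (azP (phi t)).
  - by move=> m [t ->]; exists (az (phi t.+1)).2; split; [exists t.+1|].
  - by exists 0%N.
have lwx : lt w (x (phi 0%N)).1.
  case: (azP (phi 0%N)) => Aa _ ->; rewrite /w -{1}(add0r (az _).2) ltadd2r; exact: Apos.
case: (xS (phi 0%N)) => _ _ _ hmin.
have := hmin w ((x (phi 0%N)).2).-1 Bw.
have Lw : Lt (prev (phi 0%N)) w.
  case E: (phi 0%N) => [|j] //=; rewrite E in lwx.
  exact: lt_tr lwx (desc j).
have azM j : msum A ((x j).2).-1 (az j).2 by case: (azP j).
move=> /(_ Lw (azM (phi 0%N))).
by move: (mpos (phi 0%N)); case: (x (phi 0%N)).2 => // m; rewrite /= ltnn.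
Qed.

Lemma neumann2 x : exists N, forall m, msum A m x -> (m < N)%N.
Proof.
apply: NNPP => nb.
pose Bad2 x := forall N, exists m, (N <= m)%N /\ msum A m x.
have B2 : Bad2 x.
  move=> N; apply: NNPP => h; apply: nb; exists N => m mx; rewrite ltnNge; apply/negP => le.
  by apply: h; exists m.
have [x0 [bx0 hx0]] := neumann1 (B := Bad2) (fun y h => let: ex_intro m (conj _ my) := h 0%N in ex_intro _ m my)
   (ex_intro _ x B2).
have [s [us hs]] := fin_conv x0 woA neumann1.
have bnd a : A a /\ star A (x0 - a) -> exists N, forall m, (N <= m)%N -> ~ msum A m (x0 - a).
  move=> [Aa _]; apply: NNPP => h.
  have b2 : Bad2 (x0 - a).
    move=> N; apply: NNPP => h2; apply: h; exists N => m Nm mm; apply: h2; eauto.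
  have := hx0 _ b2; apply/negP; rewrite -/(lt _ _).
  by rewrite -{2}(addr0 x0) ltadd2l -oppr0 /lt -Lopp; exact: Apos.
pose Nf a := eps 0%N (fun N => forall m, (N <= m)%N -> ~ msum A m (x0 - a)).
have [m [Nm mx]] := bx0 (\max_(a <- s) Nf a).+1.
move: Nm mx; case: m => // m Nm [a [y [Aa my e]]].
have ya : y = x0 - a by rewrite e addrC addKr.
have sa : a \in s by apply: hs; split => //; rewrite -ya; exists m.
have sx : star A (x0 - a) by rewrite -ya; exists m.
have := epsP 0%N (bnd a (conj Aa sx)).
move=> /(_ m) h; apply: h; last by rewrite -ya.
rewrite ltnS in Nm; apply: leq_trans _ Nm; exact: (@leq_bigmax_seq _ s predT Nf a sa isT).
Qed.

End Neumann.
End OG.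


Section FSum.
Variables (T : eqType) (K : fieldType).

Definition cover (F : T -> K) (s : seq T) := uniq s /\ forall h, F h != 0 -> h \in s.
Definition fsum (F : T -> K) : K := \sum_(h <- eps [::] (cover F)) F h.

Lemma sum_nz (F : T -> K) (s : seq T) :
  \sum_(h <- s) F h = \sum_(h <- [seq h <- s | F h != 0]) F h.
Proof.
rewrite big_filter [LHS](bigID (fun h => F h != 0)) /= [X in _ + X]big1 ?addr0 //.
by move=> i /negbNE/eqP.
Qed.

Lemma sum_cover F s1 s2 : cover F s1 -> cover F s2 -> \sum_(h <- s1) F h = \sum_(h <- s2) F h.
Proof.
move=> [u1 c1] [u2 c2]; rewrite sum_nz [RHS]sum_nz; apply: perm_big.
apply: uniq_perm; rewrite ?filter_uniq // => h; rewrite !mem_filter.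
by case: (boolP (F h != 0)) => //= /[dup] /c1 -> /c2 ->.
Qed.

Lemma fsumE F s : cover F s -> fsum F = \sum_(h <- s) F h.
Proof. by move=> c; apply: sum_cover => //; apply: epsP; exists s. Qed.

Lemma fsum0 F : (forall h, F h = 0) -> fsum F = 0.
Proof. by move=> h; rewrite (fsumE (s := [::])) ?big_nil //; split => // x; rewrite h eqxx. Qed.

Lemma fsum_neq0 F : fsum F != 0 -> exists h, F h != 0.
Proof.
move=> nz; apply: NNPP => nh; move/negP: nz; apply; apply/eqP; apply: fsum0 => h.
by apply/eqP; apply: NNPP => nz; apply: nh; exists h; exact/negP.
Qed.

Definition fin (F : T -> K) := exists s, cover F s.

Lemma cover_sub F G s : cover F s -> (forall h, G h != 0 -> F h != 0) -> cover G s.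
Proof. by move=> [u c] sub; split => // h /sub /c. Qed.

Lemma fsum_ext F G : F =1 G -> fsum F = fsum G.
Proof. by move=> e; rewrite /fsum (_ : F = G) //; apply: funext. Qed.

Lemma fsumD F G : fin F -> fin G -> fsum (fun h => F h + G h) = fsum F + fsum G.
Proof.
move=> [s1 c1] [s2 c2].
have c : forall H, (forall h, H h != 0 -> F h != 0 \/ G h != 0) -> cover H (undup (s1 ++ s2)).
  move=> H hH; split; first exact: undup_uniq.
  move=> h /hH [/c1.2|/c2.2] m; by rewrite mem_undup mem_cat m ?orbT.
rewrite (fsumE (c _ _)) ?(fsumE (c F _)) ?(fsumE (c G _)) ?big_split //; try by left.
- by move=> h nz; right.
- move=> h nz; apply: NNPP => /not_or_and [/negP/negbNE/eqP f0 /negP/negbNE/eqP g0].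
  by move/eqP: nz; rewrite f0 g0 addr0.
Qed.

Lemma fsumZl F c : fin F -> fsum (fun h => c * F h) = c * fsum F.
Proof.
move=> [s cs]; rewrite (fsumE cs) (fsumE (s := s)) ?mulr_sumr //.
eapply cover_sub; first exact: cs. move=> h; apply: contraNneq => ->; by rewrite mulr0.
Qed.

Lemma fsumZr F c : fin F -> fsum (fun h => F h * c) = fsum F * c.
Proof. by move=> fF; rewrite mulrC -fsumZl //; apply: fsum_ext => h; rewrite mulrC. Qed.

Lemma fsum_reindex (f g : T -> T) F : cancel f g -> cancel g f -> fin F ->
  fsum (fun h => F (f h)) = fsum F.
Proof.
move=> fg gf [s [us cs]]; rewrite (fsumE (conj us cs)) (fsumE (s := (map g s))).
  by rewrite big_map; apply: eq_bigr => h _; rewrite gf.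
split; first by rewrite map_inj_uniq //; exact: can_inj gf.
by move=> h /cs hs; rewrite -(fg h) map_f.
Qed.

Lemma fsum_exchange (F : T -> T -> K) sh su : uniq sh -> uniq su ->
  (forall h u, F h u != 0 -> h \in sh /\ u \in su) ->
  fsum (fun h => fsum (fun u => F h u)) = fsum (fun u => fsum (fun h => F h u)).
Proof.
move=> ush usu hc.
have c1 h : cover (fun u => F h u) su by split => // u /hc [].
have c2 u : cover (fun h => F h u) sh by split => // h /hc [].
rewrite (fsumE (s := sh)); last first.
  split => // h /fsum_neq0 [u] /hc [] //.
rewrite (fsumE (s := su)); last first.
  split => // u /fsum_neq0 [h] /hc [] //.
under eq_bigr do rewrite (fsumE (c1 _)).
under [RHS]eq_bigr do rewrite (fsumE (c2 _)).
exact: exchange_big.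
Qed.

End FSum.

Lemma wo_sub2 (T : Type) (L : rel T) (A B : T -> Prop) : wellordered L A -> (forall x, B x -> A x) -> wellordered L B.
Proof. move=> w s C CB; apply: w => x /CB; exact: s. Qed.

Lemma fin_sub (T : eqType) (K : fieldType) (F G : T -> K) : fin F -> (forall h, G h != 0 -> F h != 0) -> fin G.
Proof. move=> [s c] sub; exists s; exact: cover_sub c sub. Qed.

Section Ser.
Variables (T : zmodType) (L : rel T) (HL : ogrp L) (K : fieldType).
Local Notation wo := (wellordered L).

Record ser := Ser { sv : T -> K; swo : wo (supp sv) }.
Definition sert (h : ogrp L) := ser.
Local Notation S := (sert HL).
HB.instance Definition _ := gen_eqMixin S.
HB.instance Definition _ := gen_choiceMixin S.

Lemma ser_eq (f g : S) : sv f =1 sv g -> f = g.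
Proof.
case: f; case: g => /= f wf g wg /funext e; subst; congr Ser; exact: Prop_irrelevance.
Qed.

Lemma wo_single (c : T) : wo (fun x => x = c).
Proof.
move=> C CS [x Cx]; exists x; split => // y /CS ->; rewrite (CS _ Cx); exact: Lrefl HL c.
Qed.

Lemma wo_empty : wo (fun _ : T => False).
Proof. by move=> C CS [x /CS]. Qed.

Definition conv (f g : T -> K) : T -> K := fun x => fsum (fun h => f h * g (x - h)).

Lemma conv_fin (f g : T -> K) x : wo (supp f) -> wo (supp g) -> fin (fun h => f h * g (x - h)).
Proof.
move=> wf wg; have [s [us hs]] := fin_conv HL x wf wg.
exists s; split => // h; rewrite mulf_eq0 negb_or => /andP [h1 h2]; exact: hs.
Qed.

Lemma conv_supp (f g : T -> K) x : conv f g x != 0 -> sumset (supp f) (supp g) x.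
Proof.
move=> /fsum_neq0 [h]; rewrite mulf_eq0 negb_or => /andP [h1 h2].
by exists h, (x - h); split => //; rewrite addrC subrK.
Qed.

Lemma wo_conv (f g : T -> K) : wo (supp f) -> wo (supp g) -> wo (supp (conv f g)).
Proof. move=> wf wg; have := wo_sumset HL wf wg; move=> /wo_sub2; apply => x; exact: conv_supp. Qed.

Lemma wo_zero : wo (supp (fun _ : T => 0 : K)).
Proof. by move: (@wo_empty) => /wo_sub2; apply => x; rewrite /supp eqxx. Qed.

Lemma wo_addf (f g : T -> K) : wo (supp f) -> wo (supp g) -> wo (supp (fun x => f x + g x)).
Proof.
move=> wf wg; move: (wo_union HL wf wg) => /wo_sub2; apply => x nz.
case: (boolP (f x != 0)) => [h|/negbNE/eqP h]; first by left.
by right; move: nz; rewrite /supp h add0r.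
Qed.

Lemma wo_oppf (f : T -> K) : wo (supp f) -> wo (supp (fun x => - f x)).
Proof. by move=> /wo_sub2; apply => x; rewrite /supp oppr_eq0. Qed.

Lemma wo_one : wo (supp (@oneser T K)).
Proof.
move: (wo_single (c := 0)) => /wo_sub2; apply => x; rewrite /supp /oneser.
by case: (boolP (x == 0)) => [/eqP|]; rewrite ?eqxx.
Qed.

Definition ser0 : S := Ser wo_zero.
Definition seradd (f g : S) : S := Ser (wo_addf (@swo f) (@swo g)).
Definition seropp (f : S) : S := Ser (wo_oppf (@swo f)).
Definition serone : S := Ser wo_one.
Definition sermul (f g : S) : S := Ser (wo_conv (@swo f) (@swo g)).

Lemma seraddA : associative seradd. Proof. by move=> *; apply: ser_eq => x /=; rewrite addrA. Qed.
Lemma seraddC : commutative seradd. Proof. by move=> *; apply: ser_eq => x /=; rewrite addrC. Qed.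
Lemma seradd0 : left_id ser0 seradd. Proof. by move=> *; apply: ser_eq => x /=; rewrite add0r. Qed.
Lemma seraddN : left_inverse ser0 seropp seradd. Proof. by move=> *; apply: ser_eq => x /=; rewrite addNr. Qed.
HB.instance Definition _ := GRing.isZmodule.Build S seraddA seraddC seradd0 seraddN.

Lemma convA (f g k : T -> K) : wo (supp f) -> wo (supp g) -> wo (supp k) ->
  conv (conv f g) k =1 conv f (conv g k).
Proof.
move=> wf wg wk x; rewrite /conv.
have e1 : fsum (fun h => fsum (fun u => f u * g (h - u)) * k (x - h)) =
          fsum (fun h => fsum (fun u => f u * g (h - u) * k (x - h))).
  by apply: fsum_ext => h; rewrite fsumZr //; exact: conv_fin.
have e2 : fsum (fun u => f u * fsum (fun v => g v * k (x - u - v))) =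
          fsum (fun u => fsum (fun h => f u * g (h - u) * k (x - h))).
  apply: fsum_ext => u; rewrite -fsumZl; last exact: conv_fin.
  rewrite -[LHS](@fsum_reindex _ _ (fun h => h - u) (fun v => v + u)).
  - apply: fsum_ext => h /=; rewrite mulrA; congr (_ * k _).
    by rewrite opprB addrA subrK.
  - by move=> v; rewrite subrK.
  - by move=> v; rewrite addrK.
  - move: (conv_fin (x - u) wg wk) => /fin_sub; apply => v /=.
    by apply: contraNneq => ->; rewrite mulr0.
rewrite e1 e2.
have [sh [ush hsh]] := fin_conv HL x (wo_sumset HL wf wg) wk.
have [su [usu hsu]] := fin_conv HL x wf (wo_sumset HL wg wk).
apply: (fsum_exchange ush usu) => h u; rewrite !mulf_eq0 !negb_or => /andP [/andP [fu gu] kh].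
split; [apply: hsh|apply: hsu]; split => //.
- by exists u, (h - u); split => //; rewrite addrC subrK.
- by exists (h - u), (x - h); split => //; rewrite [RHS]addrC addrA subrK.
Qed.

Lemma convC (f g : T -> K) : wo (supp f) -> wo (supp g) -> conv f g =1 conv g f.
Proof.
move=> wf wg x; rewrite /conv -[LHS](@fsum_reindex _ _ (fun u => x - u) (fun u => x - u)).
- by apply: fsum_ext => u; rewrite subKr mulrC.
- by move=> u; rewrite subKr.
- by move=> u; rewrite subKr.
- exact: conv_fin.
Qed.

Lemma convDl (f g k : T -> K) : wo (supp f) -> wo (supp g) -> wo (supp k) ->
  conv (fun x => f x + g x) k =1 (fun x => conv f k x + conv g k x).
Proof.
move=> wf wg wk x; rewrite /conv -fsumD; try exact: conv_fin.
by apply: fsum_ext => h; rewrite mulrDl.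
Qed.

Lemma conv1 (f : T -> K) : conv (@oneser T K) f =1 f.
Proof.
move=> x; rewrite /conv (fsumE (s := [:: 0])) ?big_seq1 /oneser ?eqxx ?mul1r ?subr0 //.
split => // h; rewrite inE; case: (boolP (h == 0)) => //; by rewrite mul0r eqxx.
Qed.

Lemma sermulA : associative sermul.
Proof. by move=> f g k; apply: ser_eq => x /=; rewrite convA //; apply: swo. Qed.
Lemma sermulC : commutative sermul.
Proof. by move=> f g; apply: ser_eq => x /=; rewrite convC //; apply: swo. Qed.
Lemma sermul1 : left_id serone sermul.
Proof. by move=> f; apply: ser_eq => x /=; rewrite conv1. Qed.
Lemma sermulDl : left_distributive sermul seradd.
Proof. by move=> f g k; apply: ser_eq => x /=; rewrite convDl //; apply: swo. Qed.
Lemma serone0 : serone != ser0.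
Proof.
apply/negP => /eqP e; have : sv serone 0 = sv ser0 0 by rewrite e.
by rewrite /= /oneser eqxx => /eqP; rewrite oner_eq0.
Qed.
HB.instance Definition _ := GRing.Zmodule_isComNzRing.Build S sermulA sermulC sermul1 sermulDl serone0.

Lemma svD (f g : S) x : sv (f + g) x = sv f x + sv g x. Proof. by []. Qed.
Lemma svN (f : S) x : sv (- f) x = - sv f x. Proof. by []. Qed.
Lemma svB (f g : S) x : sv (f - g) x = sv f x - sv g x. Proof. by []. Qed.
Lemma sv0 x : sv (0 : S) x = 0. Proof. by []. Qed.
Lemma sv1 : sv (1 : S) = @oneser T K. Proof. by []. Qed.
Lemma svM (f g : S) : sv (f * g) = conv (sv f) (sv g). Proof. by []. Qed.

End Ser.


Section Inv.
Variables (T : zmodType) (L : rel T) (HL : ogrp L) (K : fieldType).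
Local Notation wo := (wellordered L).
Local Notation S := (sert K HL).

Lemma wo_mono (c : K) (g : T) : wo (supp (fun x => if x == g then c else 0)).
Proof.
move: (wo_single HL (c := g)) => /wo_sub2; apply => x; rewrite /supp.
by case: (boolP (x == g)) => [/eqP|]; rewrite ?eqxx.
Qed.

Definition mono (c : K) (g : T) : S := Ser (@wo_mono c g).

Lemma mono_mul c g (w : S) x : sv (mono c g * w) x = c * sv w (x - g).
Proof.
rewrite svM /conv (fsumE (s := [:: g])) ?big_seq1 /= ?eqxx //.
split => // h; rewrite inE /=; case: (boolP (h == g)) => //; by rewrite mul0r eqxx.
Qed.

Lemma monoM c c' g g' : mono c g * mono c' g' = mono (c * c') (g + g').
Proof.
apply: ser_eq => x; rewrite mono_mul /= subr_eq [g' + g]addrC.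
by case: (x == g + g'); rewrite ?mulr0.
Qed.

Lemma mono1 : mono 1 0 = 1.
Proof. by apply: ser_eq => x. Qed.

Lemma ser_neq0 (f : S) : f != 0 -> exists x, sv f x != 0.
Proof.
move=> nz; apply: NNPP => h; move/negP: nz; apply; apply/eqP; apply: ser_eq => x.
by apply/eqP; apply: NNPP => hx; apply: h; exists x; apply/negP.
Qed.

Lemma ex_inv (f : S) : f != 0 -> exists i, f * i = 1.
Proof.
move=> /ser_neq0 [x0 fx0].
have [g0 [fg0 hg0]] := wo_min (@swo _ _ _ f) (ex_intro _ x0 fx0).
set c := sv f g0.
pose u : T -> K := fun y => if y == 0 then 0 else - sv f (y + g0) / c.
have wou : wo (supp u).
  move: (wo_translate HL (c := g0) (@swo _ _ _ f)) => /wo_sub2; apply => y; rewrite /supp /u.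
  case: (y == 0); rewrite ?eqxx // mulf_eq0 negb_or oppr_eq0 => /andP [] //.
pose U : S := Ser wou.
pose A := supp (sv U).
have Apos a : A a -> lt L 0 a.
  rewrite /A /supp /= /u; case: (boolP (a == 0)) => [|a0]; rewrite ?eqxx //.
  rewrite mulf_eq0 negb_or oppr_eq0 => /andP [fa _].
  have := hg0 _ fa; rewrite -{1}(add0r g0) (Ladd2r HL) => l0.
  case: (lt_or_eq HL l0) => // e; by rewrite -e eqxx in a0.
have woA : wo A := wou.
have supU m x : sv (U ^+ m) x != 0 -> msum A m x.
  elim: m x => [|m IH] x; first by rewrite expr0 sv1 /oneser /=; case: (x =P 0) => // _; rewrite eqxx.
  rewrite exprS svM => /conv_supp [a [b [Aa Bb ->]]]; exists a, b; split => //; exact: IH.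
pose Nb x := eps 0%N (fun N => forall m, msum A m x -> (m < N)%N).
have NP x m : msum A m x -> (m < Nb x)%N by apply: (epsP 0%N (neumann2 HL Apos woA x)).
pose v x := \sum_(m < Nb x) sv (U ^+ m) x.
have vM x M : (Nb x <= M)%N -> \sum_(m < M) sv (U ^+ m) x = v x.
  move=> le; rewrite /v (big_ord_widen _ (fun m => sv (U ^+ m) x) le) [RHS]big_mkcond /=.
  apply: eq_bigr => i _; case: ifP => // /negbT; rewrite -leqNgt => le2.
  apply/eqP; apply: NNPP => /negP nz; have := NP _ _ (supU _ _ nz); by rewrite ltnNge le2.
have wov : wo (supp v).
  move: (neumann1 HL Apos woA) => /wo_sub2; apply => x; rewrite /supp /v => nz.
  apply: NNPP => ns; move/negP: nz; apply; apply/eqP; apply: big1 => i _.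
  by apply/eqP; apply: NNPP => /negP nz; apply: ns; exists i; exact: supU.
pose V : S := Ser wov.
have key x : sv (U * V) x = v x - @oneser T K x.
  have [sh [ush hsh]] := fin_conv HL x woA (neumann1 HL Apos woA).
  have starv y : v y != 0 -> star A y.
    rewrite /v => nz; apply: NNPP => ns; move/negP: nz; apply; apply/eqP; apply: big1 => i _.
    by apply/eqP; apply: NNPP => /negP nz; apply: ns; exists i; exact: supU.
  rewrite svM /conv (fsumE (s := sh)); last first.
    split => // h; rewrite mulf_eq0 negb_or => /andP [h1 h2]; apply: hsh; split => //.
    exact: starv.
  set M := maxn (Nb x) (\max_(h <- sh) Nb (x - h)%R).
  have e1 : \sum_(h <- sh) sv U h * v (x - h) = \sum_(h <- sh) \sum_(m < M) sv U h * sv (U ^+ m) (x - h).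
    rewrite big_seq_cond [RHS]big_seq_cond; apply: eq_bigr => h /andP [hs _].
    rewrite -mulr_sumr vM //; apply: leq_trans (leq_maxr _ _).
    exact: (@leq_bigmax_seq _ sh predT (fun h => Nb (x - h)%R) h hs isT).
  rewrite e1 exchange_big /=.
  have e2 m : \sum_(h <- sh) sv U h * sv (U ^+ m) (x - h) = sv (U ^+ m.+1) x.
    rewrite exprS svM /conv (fsumE (s := sh)) //.
    split => // h; rewrite mulf_eq0 negb_or => /andP [h1 h2]; apply: hsh; split => //.
    by exists m; apply: supU.
  under eq_bigr do rewrite e2.
  have := vM x M.+1 (leq_trans (leq_maxl _ _) (leqnSn _)).
  rewrite big_ord_recl expr0 sv1 => <-; rewrite addrC addKr; apply: eq_bigr => i _; by rewrite lift0.
pose W := 1 - U.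
have WV : W * V = 1.
  apply: ser_eq => x; rewrite /W mulrBl mul1r svB key /=.
  by rewrite subKr.
have fW : f = mono c g0 * W.
  apply: ser_eq => x; rewrite mono_mul /W svB sv1 /oneser /= /u subr_eq0.
  have c0 : c != 0 by [].
  case: (boolP (x == g0)) => [/eqP ->|xg]; first by rewrite subr0 mulr1.
  by rewrite subrK sub0r mulNr opprK mulrC divfK.
exists (mono c^-1 (- g0) * V).
rewrite fW mulrACA monoM WV mulr1 subrr mulfV //; exact: mono1.
Qed.

Definition serinv (f : S) : S := if f == 0 then 0 else eps 0 (fun i => f * i = 1).

Lemma sermulVf (f : S) : f != 0 -> serinv f * f = 1.
Proof.
move=> nz; rewrite /serinv (negbTE nz) mulrC.
exact: (epsP 0 (P := fun i => f * i = 1) (ex_inv nz)).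
Qed.

Lemma serinv0 : serinv 0 = 0. Proof. by rewrite /serinv eqxx. Qed.

HB.instance Definition _ := GRing.ComNzRing_isField.Build S sermulVf serinv0.

End Inv.


Lemma ogrp_pair (G : zmodType) (n : nat) (le : rel (G * 'rV[int]_n)) :
  tot_ord_group le -> ogrp le.
Proof. by case => h1 h2 h3 h4; split => // x y z; apply: h4. Qed.

Lemma ogrp_G (G : zmodType) (n : nat) (le : rel (G * 'rV[int]_n)) :
  tot_ord_group le -> ogrp (leG le).
Proof.
case => h1 h2 h3 h4; split; rewrite /leG.
- by move=> x y l1 l2; have [] := h1 _ _ l1 l2.
- by move=> x y z; apply: h2.
- by move=> x y; apply: h3.
- by move=> x y z /(h4 _ _ (z, 0)) /=; rewrite addr0.
Qed.

Lemma mulB_inj (n : nat) (B : 'M[int]_n) (k k' : 'rV[int]_n) :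
  \det B != 0 -> k *m B = k' *m B -> k = k'.
Proof.
move=> dB e; apply/eqP; rewrite -subr_eq0.
have : (k - k') *m B *m \adj B = 0 by rewrite mulmxBl e subrr mul0mx.
rewrite -mulmxA mul_mx_adj mul_mx_scalar => /eqP; rewrite scalemx_eq0 (negbTE dB) /=.
by [].
Qed.

Lemma wo_image (T1 T2 : Type) (L : rel T2) (f : T1 -> T2) (A : T1 -> Prop) :
  wellordered (fun x y => L (f x) (f y)) A ->
  wellordered L (fun z => exists p, A p /\ z = f p).
Proof.
move=> w C CS [z Cz].
have [p [Ap ez]] := CS _ Cz; subst z.
have [m [[Am Cm] hm]] := w (fun p => A p /\ C (f p)) (fun p h => h.1) (ex_intro _ p (conj Ap Cz)).
exists (f m); split => // y Cy; have [q [Aq e]] := CS _ Cy; subst y; apply: hm; by split.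
Qed.

Lemma wo_bigU (T : Type) (L : rel T) (I : eqType) (s : seq I) (F : I -> T -> Prop) :
  (forall i, wellordered L (F i)) -> (forall A B : T -> Prop, wellordered L A -> wellordered L B ->
     wellordered L (fun x => A x \/ B x)) ->
  wellordered L (fun x => exists i, i \in s /\ F i x).
Proof.
move=> wF wU; elim: s => [|i s IH].
  by move=> C CS [x /CS [i []]].
move: (wU _ _ (wF i) IH) => w C CS ne; apply: w => // x /CS [j []].
rewrite inE => /orP [/eqP -> h|js h]; [left|right] => //; by exists j.
Qed.

Lemma conv_mulser (T : zmodType) (L : rel T) (HL : ogrp L) (K : fieldType) (f g : T -> K) :
  wellordered L (supp f) -> wellordered L (supp g) -> mulser f g (conv f g).
Proof.
move=> wf wg t; have [s cs] := conv_fin HL t wf wg.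
by exists s; case: cs => us hs; split => //; rewrite /conv (fsumE (conj us hs)).
Qed.

Section Main.
Variables (K : fieldType) (G : zmodType) (n : nat)
  (le : rel (G * 'rV[int]_n)) (a : 'I_n -> G -> K) (B : 'M[int]_n)
  (gmin : 'I_n -> G) (phi : G * 'rV[int]_n -> K).
Hypotheses (Hle : tot_ord_group le)
  (Hwa : forall i, wellordered (leG le) (supp (a i)))
  (Hne : forall i, exists g, a i g != 0)
  (Hmin : forall i, a i (gmin i) != 0 /\ forall g, a i g != 0 -> leG le (gmin i) g)
  (HB : \det B != 0)
  (Hphi : wellordered (lef le gmin B) (supp phi)).

Let HLG := ogrp_G Hle.
Let HLT := ogrp_pair Hle.
Local Notation LG := (leG le).
Local Notation F := (sert K HLG).

Definition Aser (i : 'I_n) : F := Ser (@Hwa i).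

Lemma Aser_neq0 i : Aser i != 0.
Proof.
apply/negP => /eqP e; have [g ag] := @Hne i.
have : sv (Aser i) g = sv (0 : F) g by rewrite e.
by move/eqP: ag; rewrite /= => h /h.
Qed.

Definition Pf (k : 'rV[int]_n) : F := \prod_(i < n) Aser i ^ (k 0 i).

Lemma evecE (i j : 'I_n) : evec i 0 j = (j == i)%:R.
Proof. by rewrite /evec mxE eqxx. Qed.

Lemma Pf_step k i : Pf (k + evec i) = Pf k * Aser i.
Proof.
rewrite /Pf (bigD1 i) //= [in RHS](bigD1 i) //=.
have -> : \prod_(j < n | j != i) Aser j ^ ((k + evec i) 0 j) = \prod_(j < n | j != i) Aser j ^ (k 0 j).
  by apply: eq_bigr => j ji; rewrite !mxE (negbTE ji) andbF addr0.
rewrite !mxE (_ : ((0 == 0) && (i == i))%:R = 1 :> int); last by rewrite !eqxx.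
by rewrite exprzDr ?unitfE ?Aser_neq0 // expr1z mulrAC.
Qed.

Lemma Pf0 : Pf 0 = 1.
Proof. by rewrite /Pf big1 // => j _; rewrite mxE expr0z. Qed.

Lemma exP : exists P, powfam le a P.
Proof.
exists (fun k => sv (Pf k)); split.
- by rewrite Pf0.
- move=> k i; rewrite Pf_step svM; apply: (conv_mulser HLG); [exact: (@swo _ _ _ (Pf k))| exact: (@Hwa i)].
- move=> k; exact: (@swo _ _ _ (Pf k)).
Qed.


Definition Aplus (y : G) := y != 0 /\ exists i, a i (gmin i + y) != 0.

Lemma woAplus : wellordered LG Aplus.
Proof.
have w := wo_bigU (s := enum 'I_n) (F := fun i y => supp (a i) (y + gmin i))
  (fun i => wo_translate HLG (c := gmin i) (@Hwa i)) (fun A B => @wo_union _ _ HLG A B).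
move: w => /wo_sub2; apply => y [y0 [i ai]]; exists i; split; first by rewrite mem_enum.
by rewrite /supp addrC.
Qed.

Lemma Apos y : Aplus y -> lt LG 0 y.
Proof.
move=> [y0 [i ai]]; have := (@Hmin i).2 _ ai; rewrite -{1}(addr0 (gmin i)) (Ladd2l HLG) => l.
by case: (lt_or_eq HLG l) => // e; rewrite -e eqxx in y0.
Qed.

Definition kg (k : 'rV[int]_n) : G := \sum_(i < n) gmin i *~ k 0 i.

Lemma kg_step k i : kg (k + evec i) = kg k + gmin i.
Proof.
rewrite /kg (bigD1 i) //= [in RHS](bigD1 i) //=.
have -> : \sum_(j < n | j != i) gmin j *~ (k + evec i) 0 j = \sum_(j < n | j != i) gmin j *~ k 0 j.
  by apply: eq_bigr => j ji; rewrite !mxE (negbTE ji) andbF addr0.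
rewrite !mxE (_ : ((0 == 0) && (i == i))%:R = 1 :> int); last by rewrite !eqxx.
by rewrite mulrzDr mulr1z addrAC.
Qed.

Lemma kg0 : kg 0 = 0.
Proof. by rewrite /kg big1 // => j _; rewrite mxE mulr0z. Qed.

Definition Bound (P : 'rV[int]_n -> G -> K) k :=
  forall x, P k x != 0 -> exists m, star Aplus m /\ x = kg k + m.

Lemma a_shape i x : a i x != 0 -> exists y, (y = 0 \/ Aplus y) /\ x = gmin i + y.
Proof.
move=> ax; exists (x - gmin i); split; last by rewrite addrC subrK.
case: (boolP (x - gmin i == 0)) => [/eqP|nz]; [left|right] => //.
by split => //; exists i; rewrite addrC subrK.
Qed.

Lemma star_add m y : star Aplus m -> (y = 0 \/ Aplus y) -> star Aplus (y + m).
Proof.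
move=> [j mj] [->|Ay]; first by rewrite add0r; exists j.
by exists j.+1, y, m.
Qed.

Lemma sum_neq0 (T : eqType) (s : seq T) (f : T -> K) :
  \sum_(h <- s) f h != 0 -> exists2 h, h \in s & f h != 0.
Proof.
move=> nz; apply: NNPP => nh; move/negP: nz; apply; apply/eqP; apply: big1_seq => h /andP [_ hs].
by apply/eqP; apply: NNPP => /negP fh; apply: nh; exists h.
Qed.

Section WithP.
Variable P : 'rV[int]_n -> G -> K.
Hypothesis HP : powfam le a P.

Lemma HP1 : P 0 = @oneser G K. Proof. by case: HP. Qed.
Lemma HP2 k i : mulser (P k) (a i) (P (k + evec i)). Proof. by case: HP => _ h _; apply: h. Qed.
Lemma HP3 k : wellordered LG (supp (P k)). Proof. by case: HP => _ _ h; apply: h. Qed.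

Lemma Bfwd k i : Bound P k -> Bound P (k + evec i).
Proof.
move=> Bk x nz; have [s [us cs e]] := HP2 k i x.
rewrite e in nz; have [h hs] := sum_neq0 nz; rewrite mulf_eq0 negb_or => /andP [ph ah].
have [m [sm ehm]] := Bk _ ph; have [y [yA ey]] := a_shape ah.
exists (y + m); split; first exact: star_add.
rewrite kg_step; move/eqP: ey; rewrite subr_eq => /eqP ->; rewrite ehm.
by rewrite addrACA [gmin i + kg k]addrC.
Qed.

Lemma Bbwd k i : Bound P (k + evec i) -> Bound P k.
Proof.
move=> Bk; apply: NNPP => nb.
pose E x := P k x != 0 /\ ~ (exists m, star Aplus m /\ x = kg k + m).
have nE : exists x, E x.
  apply: NNPP => h; apply: nb => x px; apply: NNPP => nx; apply: h; exists x; split => //.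
have [x [[px nx] hx]] := @HP3 k E (fun x (h : E x) => proj1 h) nE.
have [s [us cs e]] := HP2 k i (x + gmin i).
have [m [sm em]] : exists m, star Aplus m /\ x + gmin i = kg (k + evec i) + m.
  apply: Bk; rewrite e.
  have xs : x \in s by apply: cs; rewrite addrC addKr mulf_neq0 //; exact: (@Hmin i).1.
  rewrite (bigD1_seq x xs us) /= big1 ?addr0.
    by rewrite addrC addKr mulf_neq0 //; exact: (@Hmin i).1.
  move=> h hx'; apply/eqP; apply: NNPP => /negP; rewrite mulf_eq0 negb_or => /andP [ph ah].
  have [y [yA ey]] := a_shape ah.
  have exh : x - h = y by apply: (addrI (gmin i)); rewrite -ey addrA [gmin i + x]addrC.
  case: yA => [y0|Ay].
    by move/eqP: exh; rewrite y0 subr_eq0 eq_sym (negbTE hx').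
  have lhx : lt LG h x.
    by rewrite -(ltadd2r HLG _ _ (- h)) subrr exh; exact: Apos.
  case: (classic (E h)) => [Eh|nEh].
    by move/negP: lhx; apply; apply: hx.
  have [m [sm ehm]] : exists m, star Aplus m /\ h = kg k + m.
    apply: NNPP => hh; apply: nEh; split => //.
  apply: nx; exists (y + m); split; first exact: star_add sm (or_intror Ay).
  by rewrite -exh ehm addrC -addrA [m + _]addrC subrK.
apply: nx; exists m; split => //.
by move: em; rewrite kg_step addrAC => /addIr.
Qed.

Lemma Bound0 : Bound P 0.
Proof.
move=> x; rewrite HP1 /oneser kg0; case: (x =P 0) => [->|]; last by rewrite eqxx.
by move=> _; exists 0; split; [exists 0%N | rewrite addr0].
Qed.

Definition mu (k : 'rV[int]_n) := (\sum_(i < n) `|k 0%R i|)%N.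

Lemma mu_step (k k' : 'rV[int]_n) (i : 'I_n) : (forall j, j != i -> k' 0 j = k 0 j) -> (`|k' 0%R i|.+1 = `|k 0%R i|)%N ->
  (mu k' < mu k)%N.
Proof.
move=> ej ei; rewrite /mu (bigD1 i) //= [X in (_ < X)%N](bigD1 i) //= -ei addSn ltnS leq_add2l.
by rewrite leq_eqVlt; apply/orP; left; apply/eqP; apply: eq_bigr => j /ej ->.
Qed.

Lemma Bound_all k : Bound P k.
Proof.
suff H : forall N k, (mu k <= N)%N -> Bound P k by apply: (H (mu k)).
move=> {k}; elim=> [|N IH] k.
  rewrite leqn0 /mu => /eqP /eqP; rewrite sum_nat_eq0 => /forallP h.
  have -> : k = 0.
    apply/rowP => j; rewrite mxE; have := h j; rewrite implyTb => /eqP /eqP.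
    by rewrite absz_eq0 => /eqP.
  exact: Bound0.
move=> le1.
case: (boolP (mu k <= N)%N) => [le2|]; first exact: IH.
rewrite -ltnNge => gt.
have [i ki] : exists i, k 0 i != 0.
  apply: NNPP => h; move: gt; rewrite /mu big1 // => j _; apply/eqP; rewrite absz_eq0.
  by apply/negP => /negP hj; apply: h; exists j.
have ej (c : int) : forall j, j != i -> (k + c *: evec i) 0 j = k 0 j.
  by move=> j ji; rewrite !mxE (negbTE ji) andbF mulr0 addr0.
have ei (c : int) : (k + c *: evec i) 0 i = k 0 i + c.
  by rewrite !mxE !eqxx mulr1.
case: (ltrgtP (k 0 i) 0) => [kn|kp|/eqP]; last by rewrite (negbTE ki).
- have mlt : (mu (k + 1 *: evec i) < mu k)%N.
    apply: mu_step => //; first exact: ej.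
    rewrite ei; move: kn; case: (k 0 i) => // p _.
    rewrite NegzE abszN; have -> : - (p.+1 : int) + 1 = - (p : int) by rewrite -addn1 PoszD opprD addrNK.
    by rewrite abszN.
  apply: (Bbwd (i := i)); rewrite -(scale1r (evec i)); apply: IH.
  by rewrite -ltnS; exact: leq_trans mlt le1.
- have mlt : (mu (k + (-1) *: evec i) < mu k)%N.
    apply: mu_step => //; first exact: ej.
    rewrite ei; move: kp; case: (k 0 i) => // -[|p] // _.
    by have -> : (p.+1 : int) + -1 = p by rewrite -addn1 PoszD addrK.
  have -> : k = (k + (-1) *: evec i) + evec i by rewrite scaleN1r addrNK.
  apply: Bfwd; apply: IH.
  by rewrite -ltnS; exact: leq_trans mlt le1.
Qed.

End WithP.

Lemma fendoE (g : G) (k : 'rV[int]_n) : fendo gmin B (g, k) = (g, 0) + (kg k, k *m B).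
Proof. by have -> : (g, 0) + (kg k, k *m B) = (g + kg k, 0 + k *m B) by []; rewrite add0r. Qed.

Lemma wo_phik k : wellordered LG (supp (fun g => phi (g, k))).
Proof.
move=> C CS [g Cg].
pose D := fun p : G * 'rV[int]_n => p.2 = k /\ C p.1.
have DS : forall p, D p -> supp phi p by move=> [g1 k1] [/= -> Cp]; exact: CS.
have [[g0 k0] [[/= e Cg0] hm]] := @Hphi D DS (ex_intro _ (g, k) (conj erefl Cg)).
subst k0; exists g0; split => // y Cy.
have := hm (y, k) (conj erefl Cy); rewrite /lef !fendoE.
by rewrite (Ladd2r HLT).
Qed.

Lemma part2 P : powfam le a P ->
  exists (C : 'rV[int]_n -> G -> K) (S : G * 'rV[int]_n -> K),
       [/\ (forall k, mulser (fun g => phi (g, k)) (P k) (C k)),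
           sums (term B C) S,
           wellordered le (supp S)
         & forall g, S (g, 0) = phi (g, 0)].
Proof.
move=> HP.
pose C k := conv (fun g => phi (g, k)) (P k).
pose kinv (y : 'rV[int]_n) := eps 0 (fun k : 'rV[int]_n => k *m B = y).
have kinvP y k : k *m B = y -> kinv y = k.
  move=> e; apply: (mulB_inj HB); rewrite e; apply: (epsP 0 (P := fun k => k *m B = y)).
  by exists k.
pose S (x : G * 'rV[int]_n) := if kinv x.2 *m B == x.2 then C (kinv x.2) x.1 else 0.
exists C, S; split.
- move=> k; apply: (conv_mulser HLG); [exact: wo_phik | exact: (HP3 HP)].
- move=> t; exists [:: kinv t.2]; split => //.
    move=> k; rewrite /term; case: (t.2 =P k *m B) => [e _|_]; last by rewrite eqxx.
    by rewrite (kinvP _ _ (esym e)) mem_seq1.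
  by rewrite big_seq1 /S /term eq_sym.
- pose X1 := fun z => exists p, supp phi p /\ z = fendo gmin B p.
  pose X2 := fun z => exists m, star Aplus m /\ z = (m, 0 : 'rV[int]_n).
  have w1 : wellordered le X1 by apply: wo_image.
  have w2 : wellordered le X2.
    by apply: (wo_image (f := fun m => (m, 0 : 'rV[int]_n))); exact: (neumann1 HLG Apos woAplus).
  move: (wo_sumset HLT w1 w2) => /wo_sub2; apply => x; rewrite /supp /S.
  case: (kinv x.2 *m B =P x.2) => [e|_]; last by rewrite eqxx.
  move=> /conv_supp [h [w [ph pw ex]]].
  have [m [sm ew]] := Bound_all HP pw.
  exists (fendo gmin B (h, kinv x.2)), (m, 0); split.
  + by exists (h, kinv x.2).
  + by exists m.
  + rewrite fendoE; apply: injective_projections => /=.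
    * by rewrite ex ew addrA.
    * by rewrite e add0r addr0.
- move=> g; rewrite /S /= (kinvP 0 0 (mul0mx _ _)) mul0mx eqxx /C (HP1 HP).
  rewrite (convC HLG) ?conv1 //; [exact: wo_phik | exact: (wo_one HLG)].
Qed.

End Main.


Unset Implicit Arguments.
Theorem mainTheorem12 (K : fieldType) (G : zmodType) (n : nat)
  (le : rel (G * 'rV[int]_n)) (a : 'I_n -> G -> K) (B : 'M[int]_n)
  (gmin : 'I_n -> G) (phi : G * 'rV[int]_n -> K) :
  tot_ord_group le ->
  (* a_i in K_w[G], nonzero, with initial exponent g_i = gmin i *)
  (forall i, wellordered (leG le) (supp (a i))) ->
  (forall i, exists g, a i g != 0) ->
  (forall i, a i (gmin i) != 0 /\ forall g, a i g != 0 -> leG le (gmin i) g) ->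
  \det B != 0 ->
  (* Phi in K_w^f[G ⊕ H] *)
  wellordered (lef le gmin B) (supp phi) ->
  (exists P, powfam le a P) /\
  (forall P, powfam le a P ->
     exists (C : 'rV[int]_n -> G -> K) (S : G * 'rV[int]_n -> K),
       [/\ (forall k, mulser (fun g => phi (g, k)) (P k) (C k)),
           (* Phi(f_1,...,f_n) = sum_k phi_k f^k exists in K_w[G ⊕ H] ... *)
           sums (term B C) S,
           wellordered le (supp S)
           (* ... and CT_x Phi(f_1,...,f_n) = phi_0 *)
         & forall g, S (g, 0) = phi (g, 0)]).

Proof.
move=> Hle Hwa Hne Hmin HB Hphi; split.
- exact: (exP Hle Hwa Hne).
- move=> P HP; eapply part2; eauto.
Qed.
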